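(* For positive integers $n,k$, $F(n,k)=k(n-1)$.
   Context: Graphs are finite, loopless, possibly with multiple edges. $\kappa'(G)$ is the edge connectivity and $\overline{\kappa'}(G)=\max\{\kappa'(H): H \text{ a subgraph of } G\}$. $F(n,k)$ denotes the maximum number of edges of a graph $G$ on $n$ vertices with $\overline{\kappa'}(G)\le k$. *)

(* Defs.v *)
From mathcomp Require Import all_boot.
Set Implicit Arguments. Unset Strict Implicit. Unset Printing Implicit Defensive.

(* A finite loopless multigraph on the vertex set 'I_n is given by its list of
   edges E : seq ('I_n * 'I_n); an edge (u,v) joins u and v (orientation is
   irrelevant), repeated entries are parallel edges. *)
Definition multigraph (n : nat) (E : seq ('I_n * 'I_n)) : bool :=
  all (fun e => e.1 != e.2) E.

Definition cut_size n (EH : seq ('I_n * 'I_n)) (S : {set 'I_n}) : nat :=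
  count (fun e => (e.1 \in S) != (e.2 \in S)) EH.

(* edge connectivity of the graph with vertex set V and edge list EH
   (all endpoints assumed in V): minimum number of edges between S and V\S
   over nonempty proper subsets S of V; 0 if |V| <= 1. *)
Definition edge_conn n (V : {set 'I_n}) (EH : seq ('I_n * 'I_n)) : nat :=
  if [exists S : {set 'I_n}, (S != set0) && (S \proper V)] then
    \big[minn/size EH]_(S : {set 'I_n} | (S != set0) && (S \proper V))
       cut_size EH S
  else 0.

(* subgraphs of (I_n, E): a vertex set V and a sub-multiset mask b E of the
   edges whose endpoints all lie in V. *)
Definition kbar n (E : seq ('I_n * 'I_n)) : nat :=
  \max_(V : {set 'I_n})
    \max_(b : (size E).-tuple bool |
            all (fun e => (e.1 \in V) && (e.2 \in V)) (mask b E))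
      edge_conn V (mask b E).

(* Main.v *)
Require Import Defs.
From mathcomp Require Import all_boot.
From mathcomp Require Import zify.

Set Implicit Arguments. Unset Strict Implicit. Unset Printing Implicit Defensive.

Definition insd n (V : {set 'I_n}) (e : 'I_n * 'I_n) : bool :=
  (e.1 \in V) && (e.2 \in V).

Lemma count_split n (V S : {set 'I_n}) (E : seq ('I_n * 'I_n)) :
  S \subset V ->
  count (insd V) E = count (insd S) E + count (insd (V :\: S)) E +
     count (fun e => (e.1 \in S) != (e.2 \in S)) (filter (insd V) E).
Proof.
move=> sub; elim: E => //= e E IH.
rewrite IH; case hV: (insd V e) => /=;
  move: hV; rewrite /insd !inE;
  have h1 := subsetP sub e.1; have h2 := subsetP sub e.2;
  case: (e.1 \in S) h1; case: (e.2 \in S) h2;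
  case: (e.1 \in V); case: (e.2 \in V) => //= h2 h1 _;
  try (by have := h1 isT); try (by have := h2 isT); lia.
Qed.

Lemma count_insd_filter n (V S : {set 'I_n}) (E : seq ('I_n * 'I_n)) :
  S \subset V -> count (insd S) (filter (insd V) E) = count (insd S) E.
Proof.
move=> sub; rewrite count_filter; apply: eq_count => e /=.
rewrite /insd; case h1: (e.1 \in S); case h2: (e.2 \in S) => //=.
by rewrite (subsetP sub _ h1) (subsetP sub _ h2).
Qed.

Lemma bound_inside n k (E : seq ('I_n * 'I_n)) :
  multigraph E -> kbar E <= k ->
  forall m (V : {set 'I_n}), #|V| <= m -> V != set0 ->
    count (insd V) E <= k * (#|V| - 1).
Proof.
move=> hm hk; elim=> [|m IH] V hV hV0.
  by move: hV0; rewrite leqn0 cards_eq0 in hV; rewrite hV.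
have [hle1|hgt1] := leqP #|V| 1.
  have /cards1P [x ->] : #|V| == 1.
    by rewrite eqn_leq hle1 card_gt0.
  suff -> : count (insd [set x]) E = 0 by [].
  clear -hm; elim: E hm => //= e E IHE /andP [he hE].
  rewrite IHE // /insd !inE.
  by case: (eqVneq e.1 x) => //= h1; case: (eqVneq e.2 x) => //= h2; rewrite h1 h2 eqxx in he.
rewrite leqNgt; apply/negP => hc.
set H := filter (insd V) E.
have hkb : edge_conn V H <= k.
  apply: leq_trans hk; rewrite /kbar.
  apply: leq_trans (leq_bigmax V).
  have hb : all (fun e => (e.1 \in V) && (e.2 \in V))
      (mask (map_tuple (insd V) (in_tuple E)) E).
    by rewrite /= -filter_mask; apply/allP => e; rewrite mem_filter => /andP [].
  apply: leq_trans (leq_bigmax_cond _ hb).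
  by rewrite /= -filter_mask.
move: hkb; apply/negP; rewrite -ltnNge /edge_conn.
have [x xV] := elimT (@set0Pn _ V) hV0.
have -> : [exists S : {set 'I_n}, (S != set0) && (S \proper V)].
  apply/existsP; exists [set x]; rewrite properEcard sub1set xV cards1 hgt1 andbT.
  rewrite andbT; by apply/set0Pn; exists x; rewrite inE.
have hsz : k < size H.
  rewrite size_filter; apply: leq_ltn_trans hc; apply: leq_pmulr; lia.
apply: (big_ind (fun y => k < y)) => //.
  by move=> a b ha hb; rewrite leq_min ha hb.
move=> S /andP [hS0 hSV].
have hsub : S \subset V by apply: proper_sub.
have hcS : #|S| < #|V| by apply: proper_card.
have hD : #|V :\: S| = #|V| - #|S| by apply: cardsDS.
have hS1 : 0 < #|S| by rewrite card_gt0.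
have hD0 : V :\: S != set0.
  by rewrite -card_gt0 hD; lia.
have IH1 := IH S ltac:(lia) hS0.
have IH2 := IH (V :\: S) ltac:(lia) hD0.
have hsplit := count_split E hsub.
rewrite /cut_size -/H.
rewrite hD in IH2.
move: hsplit IH1 IH2 hc.
set a := count (insd S) E; set b := count (insd (V :\: S)) E.
set c := count _ H; set t := count (insd V) E.
move=> -> IH1 IH2 hc.
have e1 : k * (#|V| - 1) = k * (#|S| - 1) + k * (#|V| - #|S| - 1) + k.
  by rewrite -[k in _ + _ + k]muln1 -!mulnDr; congr (_ * _); lia.
have IH1' : a <= k * (#|S| - 1) := IH1. clear IH1.
move: IH1' IH2 hc e1; generalize (k * (#|S| - 1)) (k * (#|V| - #|S| - 1)) (k * (#|V| - 1)) => p q r; lia.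
Qed.

Lemma bigmin_le (I : finType) (P : pred I) (F : I -> nat) x0 i :
  P i -> \big[minn/x0]_(j | P j) F j <= F i.
Proof.
move=> Pi; rewrite -big_filter.
have : i \in [seq j <- index_enum I | P j] by rewrite mem_filter Pi mem_index_enum.
elim: (filter _ _) => //= j s IH.
rewrite big_cons inE => /orP [/eqP <-| /IH h]; first exact: geq_minl.
exact: leq_trans (geq_minr _ _) h.
Qed.

Lemma count_flatten_nseq T (p : pred T) k (L : seq T) :
  count p (flatten (nseq k L)) = k * count p L.
Proof. by elim: k => //= k IH; rewrite count_cat IH mulSn. Qed.

Lemma all_flatten_nseq T (p : pred T) k (L : seq T) :
  all p L -> all p (flatten (nseq k L)).
Proof. by move=> h; elim: k => //= k IH; rewrite all_cat h IH. Qed.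

Theorem corollary3p6 (n k : nat) : 0 < n -> 0 < k ->
  (exists E : seq ('I_n * 'I_n),
      [/\ multigraph E, kbar E <= k & size E = k * (n - 1)]) /\
  (forall E : seq ('I_n * 'I_n),
      multigraph E -> kbar E <= k -> size E <= k * (n - 1)).
Proof.
case: n => [|n] // _ _; split.
  pose L : seq ('I_n.+1 * 'I_n.+1) := [seq (ord0, i) | i <- enum (predC1 (ord0 : 'I_n.+1))].
  exists (flatten (nseq k L)); split.
  - apply: all_flatten_nseq; rewrite all_map; apply/allP => i.
    by rewrite mem_enum /= eq_sym.
  - apply/bigmax_leqP => V _; apply/bigmax_leqP => b _.
    rewrite /edge_conn; case: ifP => // /existsP [S /andP [hS0 hSV]].
    have [i [iV i0 hp]] : exists i, [/\ i \in V, i != ord0 & [set i] \proper V].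
      have [x xS] := elimT (@set0Pn _ S) hS0.
      have [y yV yS] : exists2 y, y \in V & y \notin S.
        case/properP: hSV => _ [y ? ?]; by exists y.
      have xV : x \in V := subsetP (proper_sub hSV) _ xS.
      have xy : x != y by apply: contraNneq yS => <-.
      have pr : forall z w, z \in V -> w \in V -> z != w -> [set z] \proper V.
        move=> z w zV wV zw; apply/properP; rewrite sub1set zV; split => //.
        by exists w => //; rewrite inE eq_sym.
      case: (eqVneq x ord0) => [hx|hx].
        exists y; split => //; last by apply: (pr y x) => //; rewrite eq_sym.
        by rewrite -hx eq_sym.
      by exists x; split => //; apply: (pr x y).
    apply: leq_trans (@bigmin_le _ _ _ _ ([set i] : {set 'I_n.+1}) _) _.
      by rewrite hp andbT; apply/set0Pn; exists i; rewrite inE.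
    rewrite /cut_size; apply: leq_trans (leq_count_mask _ _ _) _.
    rewrite count_flatten_nseq -[X in _ <= X]muln1 leq_mul2l; apply/orP; right.
    rewrite count_map.
    have -> : count (preim (fun i0 => (ord0, i0))
                 (fun e : 'I_n.+1 * 'I_n.+1 => (e.1 \in [set i]) != (e.2 \in [set i])))
              (enum (predC1 ord0)) = count (pred1 i) (enum (predC1 ord0)).
      apply: eq_count => j /=; rewrite !inE.
      have -> : (ord0 == i) = false by apply/negbTE; rewrite eq_sym.
      by case: (j == i).
    by rewrite count_uniq_mem ?enum_uniq // leq_b1.
  - rewrite size_flatten /shape map_nseq sumn_nseq size_map -cardE cardC1 card_ord.
    by rewrite subn1 mulnC.
move=> E hm hk.
have := bound_inside hm hk (leqnn #|[set: 'I_n.+1]|).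
rewrite cardsT card_ord.
have -> : count (insd [set: 'I_n.+1]) E = size E.
  by rewrite -[RHS]count_predT; apply: eq_count => e; rewrite /insd !inE.
apply; apply/set0Pn; exists ord0; by rewrite inE.
Qed.
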